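(* In equilibrium of the execution auction game, Builder 1 proposes the block with higher probability than if the right to propose had been sold in Period 2 (e.g., via MEV-Boost).
   Context: Execution auction game: players are 2 builders and any number of non-builders. In Period 1 the right to propose a future block is sold in an English (equivalently second-price) auction. In Period 2, each builder i privately learns its value v_i, drawn independently from CDF F_i with continuous density f_i on [0,1], with non-decreasing hazard rates, and F_1 dominating F_2 in the hazard rate order; non-builders value proposing at 0. Only distributions are known (commonly) in Period 1. The Period 1 winner, after learning its own value, either proposes itself or resells via the Myerson optimal auction; for a builder owner with value v_1 this is a take-it-or-leave-it offer to builder 2 at price v_2^*(v_1) > v_1 solving v_2^* - (1-F_2(v_2^* ))/f_2(v_2^* ) = v_1, and builder 2 buys only if v_2 ≥ v_2^*(v_1). Equilibrium is subgame perfect with truthful bidding in the Period 1 auction; in this equilibrium Builder 1 always wins the Period 1 auction. Benchmark: selling the right in Period 2 via MEV-Boost, an English auction in which builders bid truthfully, so builder 2 wins whenever v_2 ≥ v_1. *)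

(* Defs.v *)
From HB Require Import structures.
From mathcomp Require Import all_boot all_order all_algebra.
From mathcomp Require Import all_classical all_reals all_analysis.
Set Implicit Arguments. Unset Strict Implicit. Unset Printing Implicit Defensive.
Import Order.TTheory GRing.Theory Num.Theory.
Import numFieldNormedType.Exports.
Local Open Scope classical_set_scope.
Local Open Scope ring_scope.

Section defs.
Variable R : realType.
Notation mu := (@lebesgue_measure R).

Definition is_cdf_with_density (F f : R -> R) : Prop :=
  [/\ {within `[0%R, 1%R], continuous f},
      (forall x, 0 <= x <= 1 -> 0 <= f x),
      (forall x : R, 0 <= x <= 1 ->
          (\int[mu]_(t in `[0%R, x]) (f t)%:E)%E = (F x)%:E),
      (forall x, x < 0 -> F x = 0) &
      (forall x, 1 <= x -> F x = 1)].

Definition hazard (F f : R -> R) (x : R) : R := f x / (1 - F x).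

Definition nondecreasing_hazard (F f : R -> R) : Prop :=
  forall x y, 0 <= x -> x <= y -> y < 1 -> hazard F f x <= hazard F f y.

Definition hazard_rate_dominates (F1 f1 F2 f2 : R -> R) : Prop :=
  forall x, 0 <= x < 1 -> hazard F1 f1 x <= hazard F2 f2 x.

Definition virtual_value (F f : R -> R) (v : R) : R := v - (1 - F v) / f v.

(* v2star is the Myerson (optimal take-it-or-leave-it) resale price
   of an owner with value v1: v2star v1 > v1 solves the virtual-value equation. *)
Definition myerson_price (F2 f2 v2star : R -> R) : Prop :=
  forall v1, 0 <= v1 < 1 ->
    [/\ v1 < v2star v1, v2star v1 <= 1, 0 < f2 (v2star v1) &
        virtual_value F2 f2 (v2star v1) = v1].

(* Joint law of the independent values (v1, v2), with density f1(v1) f2(v2). *)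
Definition prob2 (f1 f2 : R -> R) (E : set (R * R)) : \bar R :=
  (\int[(mu \x mu)%E]_(z in E `&` (`[0%R, 1%R] `*` `[0%R, 1%R]))
      (f1 z.1 * f2 z.2)%:E)%E.

(* Equilibrium of the execution auction: Builder 1 wins Period 1, learns v1,
   offers the right to builder 2 at price v2star v1; builder 2 buys iff
   v2 >= v2star v1. *)
Definition B1_proposes_auction (v2star : R -> R) : set (R * R) :=
  [set z | z.2 < v2star z.1].

(* MEV-Boost benchmark (English auction in Period 2): builder 2 wins iff
   v2 >= v1, so Builder 1 proposes iff v2 < v1. *)
Definition B1_proposes_mevboost : set (R * R) := [set z | z.2 < z.1].

End defs.

(* Main.v *)
Require Import Defs.
From HB Require Import structures.
From mathcomp Require Import all_boot all_order all_algebra.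
From mathcomp Require Import all_classical all_reals all_analysis.
From mathcomp Require Import lra measurable_realfun.
Import Order.TTheory GRing.Theory Num.Theory.
Import numFieldNormedType.Exports.
Local Open Scope classical_set_scope.
Local Open Scope ring_scope.
Lemma cont_pos (R : realType) (f : R -> R) (A : set R) x :
  {within A, continuous f} -> A x -> 0 < f x ->
  exists2 d : R, 0 < d & forall y, A y -> `|x - y| < d -> f x / 2 < f y.
Proof.
move=> cf Ax fx0.
have H := cf x.
have H2 : f t @[t --> within A (nbhs x)] --> f x.
  by rewrite (nbhs_subspace_in Ax).
have : f x / 2 < f x by rewrite ltr_pdivrMr // ltr_pMr // ltr1n.
move/(cvgr_gt _ H2).
rewrite /prop_near1 /within /=.
move/nbhs_ballP => [d d0 Hd]; exists d => // y Ay xy.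
apply: Hd => //.
Qed.

Lemma le_integral_nm d (T : measurableType d) (R : realType)
  (m : {measure set T -> \bar R}) (D1 D2 : set T) (f g : T -> \bar R) :
  D1 `<=` D2 -> (forall x, D1 x -> (0 <= f x <= g x)%E) ->
  (forall x, D2 x -> (0 <= g x)%E) ->
  (\int[m]_(x in D1) f x <= \int[m]_(x in D2) g x)%E.
Proof.
move=> D12 fg g0.
rewrite ge0_integralE; last by move=> x /fg /andP[].
rewrite ge0_integralE //.
apply: ereal_sup_le => _ [h hle <-]; exists h => //= x.
apply: le_trans (hle x) _.
rewrite /patch; case: ifP => xD1.
  have xD2 : x \in D2 by move: xD1; rewrite !inE => /D12.
  by rewrite xD2; move: xD1; rewrite inE => /fg /andP[].
by case: ifP => // xD2; rewrite inE in xD2; exact: g0.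
Qed.

Lemma vv_mono (R : realType) (F f : R -> R) :
  nondecreasing_hazard F f -> (forall x, 0 <= x <= 1 -> 0 <= f x) ->
  forall y y', 0 <= y -> y < y' -> y' < 1 -> 0 < f y -> F y < 1 ->
  virtual_value F f y < virtual_value F f y'.
Proof.
move=> hz f0 y y' y0 yy' y'1 fy Fy.
have hy : 0 < hazard F f y by rewrite /hazard divr_gt0 // subr_gt0.
have hyy' := hz y y' y0 (ltW yy') y'1.
have hy' : 0 < hazard F f y' by exact: lt_le_trans hyy'.
have vvE z : 0 < hazard F f z -> virtual_value F f z = z - (hazard F f z)^-1.
  by move=> _; rewrite /virtual_value /hazard invf_div.
rewrite !vvE //.
have : (hazard F f y')^-1 <= (hazard F f y)^-1.
  by rewrite lef_pV2 // posrE.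
lra.
Qed.

Lemma pos_after (R : realType) (F f : R -> R) :
  nondecreasing_hazard F f -> (forall x, 0 <= x <= 1 -> 0 <= f x) ->
  forall y y', 0 <= y -> y <= y' -> y' < 1 -> 0 < f y -> F y < 1 ->
  0 < f y' /\ F y' < 1.
Proof.
move=> hz f0 y y' y0 yy' y'1 fy Fy.
have hy : 0 < hazard F f y by rewrite /hazard divr_gt0 // subr_gt0.
have hyy' := hz y y' y0 yy' y'1.
have hy' : 0 < hazard F f y' by exact: lt_le_trans hyy'.
move: hy'; rewrite /hazard.
have fy'0 : 0 <= f y' by apply: f0; apply/andP; split; [exact: le_trans yy'|exact: ltW].
rewrite le_eqVlt eq_sym in fy'0; case/orP: fy'0 => [/eqP ->|fy'].
  by rewrite mul0r ltxx.
by rewrite pmulr_rgt0 // invr_gt0 subr_gt0 => ->.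
Qed.

Lemma mu_cc (R : realType) (x y : R) : x <= y ->
  lebesgue_measure (`[x, y] : set R) = (y - x)%:E.
Proof.
move=> xy; rewrite lebesgue_measure_itv /=.
case: ifPn => xy'.
  by rewrite EFinB.
have -> : x = y by apply/eqP; rewrite eq_le xy /= leNgt -lte_fin.
by rewrite subrr.
Qed.

Lemma mu_co (R : realType) (x y : R) : x < y ->
  lebesgue_measure (`[x, y[ : set R) = (y - x)%:E.
Proof.
move=> xy; rewrite lebesgue_measure_itv /= lte_fin xy.
by rewrite EFinB.
Qed.

Lemma prod_rect (R : realType) (A B : set R) : measurable A -> measurable B ->
  ((@lebesgue_measure R) \x (@lebesgue_measure R))%E (A `*` B) =
  (lebesgue_measure A * lebesgue_measure B)%E.
Proof. by move=> mA mB; rewrite product_measure1E. Qed.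

Lemma star_props (R : realType) (F2 f2 v2star : R -> R) :
  (forall x, 1 <= x -> F2 x = 1) ->
  myerson_price F2 f2 v2star -> forall v, 0 <= v < 1 ->
  [/\ v < v2star v, v2star v < 1, 0 < f2 (v2star v) & F2 (v2star v) < 1].
Proof.
move=> F2one my v v01.
have [lt le1 fpos vvE] := my v v01.
have s1 : v2star v < 1.
  rewrite lt_neqAle le1 andbT; apply/negP => /eqP e.
  move: vvE; rewrite e /virtual_value F2one // subrr mul0r subr0 => e1.
  by move: v01; rewrite e1 ltxx andbF.
split => //.
have : 0 < (1 - F2 (v2star v)) / f2 (v2star v).
  move: vvE; rewrite /virtual_value => vvE.
  lra.
by rewrite pmulr_lgt0 ?invr_gt0 // subr_gt0.
Qed.

Lemma star_mono (R : realType) (F2 f2 v2star : R -> R) :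
  (forall x, 0 <= x <= 1 -> 0 <= f2 x) ->
  (forall x, 1 <= x -> F2 x = 1) ->
  nondecreasing_hazard F2 f2 ->
  myerson_price F2 f2 v2star -> forall a v, 0 <= a -> a <= v -> v < 1 ->
  v2star a <= v2star v.
Proof.
move=> f20 F2one hz my a v a0 av v1.
have a01 : 0 <= a < 1 by apply/andP; split => //; exact: le_lt_trans v1.
have v01 : 0 <= v < 1 by apply/andP; split => //; exact: le_trans av.
have [lta sa1 fa Fa] := star_props _ _ _ _ F2one my _ a01.
have [ltv sv1 fv Fv] := star_props _ _ _ _ F2one my _ v01.
rewrite leNgt; apply/negP => H.
have := vv_mono _ _ _ hz f20 (v2star v) (v2star a).
have [_ _ _ ea] := my a a01.
have [_ _ _ ev] := my v v01.
rewrite ea ev => /(_ _ H sa1 fv Fv).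
have : 0 <= v2star v by apply: le_trans (ltW ltv); exact: le_trans av.
move=> h /(_ h).
lra.
Qed.

Lemma measG (R : realType) (f1 f2 : R -> R) :
  {within `[0%R, 1%R], continuous f1} -> {within `[0%R, 1%R], continuous f2} ->
  measurable_fun ((`[0%R, 1%R] : set R) `*` (`[0%R, 1%R] : set R)) (fun z : R * R => (f1 z.1 * f2 z.2)%:E).
Proof.
move=> c1 c2.
have mI : measurable (`[0%R, 1%R] : set R) by exact: measurable_itv.
have m1 := subspace_continuous_measurable_fun mI c1.
have m2 := subspace_continuous_measurable_fun mI c2.
have m1' := (measurable_restrictT _ mI).1 m1.
have m2' := (measurable_restrictT _ mI).1 m2.
have mh : measurable_fun setT (fun z : R * R => ((f1 \_ `[0%R, 1%R]) z.1 * (f2 \_ `[0%R, 1%R]) z.2)%:E).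
  apply/measurable_EFinP; apply: measurable_funM.
    exact: measurableT_comp m1' measurable_fst.
  exact: measurableT_comp m2' measurable_snd.
apply: (eq_measurable_fun (fun z : R * R => ((f1 \_ `[0%R, 1%R]) z.1 * (f2 \_ `[0%R, 1%R]) z.2)%:E)).
  move=> [x y]; rewrite inE => -[/= Ix Iy].
  by rewrite /patch !mem_set.
apply: measurable_funS mh => //.
Qed.
Theorem corollary1 (R : realType) (F1 f1 F2 f2 v2star : R -> R) :
  is_cdf_with_density F1 f1 ->
  is_cdf_with_density F2 f2 ->
  nondecreasing_hazard F1 f1 ->
  nondecreasing_hazard F2 f2 ->
  hazard_rate_dominates F1 f1 F2 f2 ->
  myerson_price F2 f2 v2star ->
  (prob2 f1 f2 (@B1_proposes_mevboost R) < prob2 f1 f2 (B1_proposes_auction v2star))%E.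
Proof.
move=> [c1 f10 int1 _ F1one] [c2 f20 _ _ F2one] _ hz2 _ my.
pose I : set R := [set` `[0%R, 1%R]].
have mI : measurable I by exact: measurable_itv.
have IP x : I x <-> 0 <= x <= 1 by rewrite /I /= in_itv.
have [x0 Ix0 fx0] : exists2 x, I x & 0 < f1 x.
  apply: contrapT => H.
  have Z : forall x, I x -> (f1 x)%:E = 0%E.
    move=> x Ix; congr EFin; apply/eqP; rewrite eq_le f10 ?andbT; last exact/IP.
    by rewrite leNgt; apply/negP => h; apply: H; exists x.
  have := int1 1; rewrite lexx ler01 => /(_ isT).
  rewrite integral0_eq // F1one // => /(congr1 fine) /= /eqP.
  by rewrite eq_sym oner_eq0.
have x01 : 0 <= x0 <= 1 by exact/IP.
have /andP[x0ge x0le] := x01.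
have [d1 d10 Hd1] := cont_pos _ _ _ _ c1 Ix0 fx0.
pose a := Num.max 0 (x0 - d1 / 2).
have a0 : 0 <= a by rewrite /a le_max lexx.
have ax0 : x0 - d1 / 2 <= a by rewrite /a le_max lexx orbT.
have ax : a <= x0 by rewrite /a ge_max x0ge /=; lra.
have a1 : a < 1 by rewrite /a gt_max ltr01 /=; lra.
have a01 : 0 <= a < 1 by rewrite a0 a1.
have [as_ s1 fs Fs] := star_props _ _ _ _ F2one my a a01.
set s := v2star a in as_ s1 fs Fs *.
pose e := Num.min (d1 / 4) ((s - a) / 2).
have e0 : 0 < e by rewrite /e lt_min; apply/andP; split; lra.
have ed1 : e <= d1 / 4 by rewrite /e ge_min lexx.
have es : e <= (s - a) / 2 by rewrite /e ge_min lexx orbT.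
pose b := a + e.
have bs : b < s by rewrite /b; lra.
have b1 : b < 1 by rewrite /b; lra.
have ab : a <= b by rewrite /b; lra.
have f1ab y : a <= y <= b -> f1 x0 / 2 < f1 y.
  move=> /andP[ay yb]; apply: Hd1.
    by apply/IP; apply/andP; split; lra.
  rewrite ltr_norml; apply/andP; split; rewrite /b in yb; lra.
have Is : I s by apply/IP; apply/andP; split; lra.
have [d2 d20 Hd2] := cont_pos _ _ _ _ c2 Is fs.
pose c := Num.max b (s - d2 / 2).
have cb : b <= c by rewrite /c le_max lexx.
have cd : s - d2 / 2 <= c by rewrite /c le_max lexx orbT.
have cs : c < s by rewrite /c gt_max bs /=; lra.
have f2cs y : c <= y < s -> f2 s / 2 < f2 y.
  move=> /andP[cy ys]; apply: Hd2.
    by apply/IP; apply/andP; split; lra.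
  rewrite ltr_norml; apply/andP; split; lra.
pose Sq : set (R * R) := I `*` I.
have mSq : measurable Sq by exact: measurableX.
have mG : measurable_fun Sq (fun z : R * R => (f1 z.1 * f2 z.2)%:E) := measG _ _ _ c1 c2.
have G0 : forall z, Sq z -> (0 <= (f1 z.1 * f2 z.2)%:E)%E.
  move=> z [/IP h1 /IP h2]; rewrite lee_fin mulr_ge0 //; [exact: f10|exact: f20].
have [k1 k1I Hk1] := EVT_max ler01 c1.
have [k2 k2I Hk2] := EVT_max ler01 c2.
pose K := f1 k1 * f2 k2.
have GK : forall z, Sq z -> ((f1 z.1 * f2 z.2)%:E <= K%:E)%E.
  move=> z [/IP h1 /IP h2]; rewrite lee_fin /K; apply: ler_pM.
  - exact: f10.
  - exact: f20.
  - by apply: Hk1; rewrite in_itv.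
  - by apply: Hk2; rewrite in_itv.
have muSq : ((@lebesgue_measure R) \x (@lebesgue_measure R))%E Sq = 1%E.
  by rewrite prod_rect // mu_cc ?ler01 // subr0 mule1.
pose A1 : set (R * R) := [set z | z.2 < z.1] `&` ([set` `[0%R, 1%R[] `*` I).
pose N0 : set (R * R) := [set` `[1%R, 1%R]] `*` I.
pose C : set (R * R) := [set` `[a, b]] `*` [set` `[c, s[].
have A1Sq : A1 `<=` Sq.
  move=> z [_ [/= h1 h2]]; split => //; apply/IP.
  by move: h1; rewrite in_itv /= => /andP[-> /ltW].
have N0Sq : N0 `<=` Sq.
  move=> z [/= h1 h2]; split => //; apply/IP.
  by move: h1; rewrite in_itv /= => /andP[h h']; apply/andP; split => //; lra.
have CSq : C `<=` Sq.
  move=> z [/= h1 h2]; move: h1 h2; rewrite !in_itv /= => /andP[h1 h1'] /andP[h2 h2'].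
  by split; apply/IP; apply/andP; split; lra.
have mA1 : measurable A1.
  apply: measurableI; last by apply: measurableX => //; exact: measurable_itv.
  have -> : [set z : R * R | z.2 < z.1] = setT `&` [set z : R * R | ((EFin \o snd) z < (EFin \o fst) z)%E].
    by apply/seteqP; split => z /=; [move=> h; split => //; rewrite lte_fin|move=> [_]; rewrite lte_fin].
  apply: measurable_lte => //.
    exact: measurableT_comp (@EFin_measurable R setT) measurable_snd.
  exact: measurableT_comp (@EFin_measurable R setT) measurable_fst.
have mN0 : measurable N0 by apply: measurableX => //; exact: measurable_itv.
have mC : measurable C by apply: measurableX => //; exact: measurable_itv.
pose mu2 := ((@lebesgue_measure R) \x (@lebesgue_measure R))%E.
have stepA : (prob2 f1 f2 (@B1_proposes_mevboost R) <=
    \int[mu2]_(z in A1 `|` N0) (f1 z.1 * f2 z.2)%:E)%E.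
  rewrite /prob2; apply: le_integral_nm.
  - move=> z [/= lt [h1 h2]].
    have /IP/andP[z10 z11] : I z.1 := h1.
    have [z1|z1] := ltP z.1 1.
      by left; split => //; split => //=; rewrite in_itv /= z10 z1.
    by right; split => //=; rewrite in_itv /= z1 z11.
  - by move=> z [_ hz]; rewrite G0 ?lexx.
  - by move=> z [/A1Sq|/N0Sq]; exact: G0.
have splitA : (\int[mu2]_(z in A1 `|` N0) (f1 z.1 * f2 z.2)%:E =
    \int[mu2]_(z in A1) (f1 z.1 * f2 z.2)%:E + \int[mu2]_(z in N0) (f1 z.1 * f2 z.2)%:E)%E.
  rewrite ge0_integral_setU //.
  - apply: measurable_funS mG => //; move=> z [/A1Sq|/N0Sq] //.
  - by move=> z [/A1Sq|/N0Sq]; exact: G0.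
  - rewrite disj_set2E; apply/eqP/seteqP; split => // z [[_ [/= h1 _]] [/= h2 _]].
    by move: h1 h2; rewrite !in_itv /= => /andP[_ h1] /andP[h2 _]; lra.
have N0z : (\int[mu2]_(z in N0) (f1 z.1 * f2 z.2)%:E = 0)%E.
  apply: null_set_integral => //; first exact: measurable_funS mG.
  have h := product_measure1E (@lebesgue_measure R) (@lebesgue_measure R) (measurable_itv `[1%R, 1%R]) mI.
  apply: (eq_trans h); transitivity (((1 - 1 : R)%:E) * lebesgue_measure I)%E.
    by congr (_ * _)%E; exact: mu_cc.
  by rewrite subrr mul0e.
have stepB : (\int[mu2]_(z in A1 `|` C) (f1 z.1 * f2 z.2)%:E <=
    prob2 f1 f2 (B1_proposes_auction v2star))%E.
  rewrite /prob2; apply: le_integral_nm.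
  - move=> z [hz|hz].
      split; last exact: A1Sq.
      move: hz => [/= lt [/= h1 _]]; move: h1; rewrite in_itv /= => /andP[h1 h1'].
      have [+ _ _ _] := my z.1 (introT andP (conj h1 h1')).
      rewrite /B1_proposes_auction /=; lra.
    split; last exact: CSq.
    move: hz => [/= h1 h2]; move: h1 h2; rewrite !in_itv /= => /andP[h1 h1'] /andP[h2 h2'].
    rewrite /B1_proposes_auction /=.
    have := star_mono _ _ _ _ f20 F2one hz2 my a z.1 a0 h1 (le_lt_trans h1' b1).
    rewrite -/s; lra.
  - move=> z [hz|hz]; rewrite G0 ?lexx //; [exact: A1Sq|exact: CSq].
  - by move=> z [_ hz]; exact: G0.
have splitB : (\int[mu2]_(z in A1 `|` C) (f1 z.1 * f2 z.2)%:E =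
    \int[mu2]_(z in A1) (f1 z.1 * f2 z.2)%:E + \int[mu2]_(z in C) (f1 z.1 * f2 z.2)%:E)%E.
  rewrite ge0_integral_setU //.
  - apply: measurable_funS mG => //; move=> z [/A1Sq|/CSq] //.
  - by move=> z [/A1Sq|/CSq]; exact: G0.
  - rewrite disj_set2E; apply/eqP/seteqP; split => // z [[/= lt _] [/= h1 h2]].
    by move: h1 h2; rewrite !in_itv /= => /andP[_ h1] /andP[h2 _]; lra.
have K0 : 0 <= K.
  have h1 := k1I; have h2 := k2I; rewrite !in_itv /= in h1 h2.
  by rewrite /K mulr_ge0 //; [exact: f10|exact: f20].
have finX : (\int[mu2]_(z in A1) (f1 z.1 * f2 z.2)%:E)%E \is a fin_num.
  rewrite ge0_fin_numE; last by apply: integral_ge0 => z hz; apply: G0; exact: A1Sq.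
  apply: (@le_lt_trans _ _ (K%:E * 1)%E); last by rewrite mule1 ltry.
  apply: (@le_trans _ _ (\int[mu2]_(z in Sq) (cst K%:E) z)%E).
    apply: le_integral_nm => //.
      by move=> z hz; rewrite G0 ?GK //; exact: A1Sq.
  rewrite integral_cst // le_eqVlt; apply/orP; left; apply/eqP; congr (_ * _)%E; exact: muSq.
have posC : (0 < \int[mu2]_(z in C) (f1 z.1 * f2 z.2)%:E)%E.
  pose m := f1 x0 / 2 * (f2 s / 2).
  have m0 : 0 < m by rewrite /m mulr_gt0 // divr_gt0.
  apply: (@lt_le_trans _ _ (\int[mu2]_(z in C) (cst m%:E) z)%E).
    rewrite integral_cst //.
    have h := product_measure1E (@lebesgue_measure R) (@lebesgue_measure R)
      (measurable_itv `[a, b]) (measurable_itv `[c, s[).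
    have hC : mu2 C = ((b - a)%:E * (s - c)%:E)%E.
      apply: (eq_trans h); congr (_ * _)%E; [exact: mu_cc|exact: mu_co].
    apply: (@lt_le_trans _ _ (m%:E * ((b - a)%:E * (s - c)%:E))%E); last first.
      by rewrite le_eqVlt; apply/orP; left; apply/eqP; congr (_ * _)%E; exact/esym.
    rewrite -!EFinM lte_fin; apply: mulr_gt0 => //; apply: mulr_gt0; rewrite subr_gt0 // /b; lra.
  apply: le_integral_nm => //.
    move=> z hz; apply/andP; split; first by rewrite /= lee_fin ltW.
    move: hz => [/= h1 h2]; move: h1 h2; rewrite !in_itv /= => h1 h2.
    rewrite lee_fin /m; apply: ler_pM.
    - by rewrite ltW // divr_gt0.
    - by rewrite ltW // divr_gt0.
    - exact/ltW/f1ab.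
    - exact/ltW/f2cs.
  by move=> z hz; apply: G0; exact: CSq.
apply: (le_lt_trans stepA); rewrite splitA N0z adde0.
apply: (lt_le_trans _ stepB); rewrite splitB.
by rewrite lteDl.
Qed.
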